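(* Let $d\ge1$. Among all spherical $d$-simplices on $S^d$ with circumradius $R'$ and $\cos R'<1/\sqrt{d+1}$ that have all their vertices on their circumsphere, the regular simplex has minimal vertex diameter.
   Context: $S^d$ is the unit sphere in $\mathbb{R}^{d+1}$ and $\angle(x,y)=\arccos(x^Ty)$ is the spherical distance. A spherical $d$-simplex is $\mathrm{co}\{a_1,\dots,a_{d+1}\}=\{\sum\lambda_ia_i/\|\sum\lambda_ia_i\|:\lambda_i\ge0,\text{ not all }0\}$ with $a_1,\dots,a_{d+1}\in S^d$ linearly independent. It is regular if all $\angle(a_i,a_j)$, $i\ne j$, are equal. The circumradius $R'$ and circumcenter $C$ of a set are the radius and center of the smallest spherical cap $\{y\in S^d:\angle(C,y)\le\rho\}$ containing it; the circumsphere is the boundary of this cap. The vertex diameter $D_v$ of the simplex $\mathrm{co}\{a_1,\dots,a_{d+1}\}$ is defined as follows. For each $i$, let $a_i'$ be the intersection of the great circle through $a_i$ and $C$ with $\mathrm{co}\{a_1,\dots,a_{i-1},a_{i+1},\dots,a_{d+1}\}$. Then $D_v=\max_i\angle(a_i,a_i')$. *)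

(* Defs.v *)
From HB Require Import structures.
From mathcomp Require Import all_boot all_order all_algebra.
From mathcomp Require Import all_classical all_reals all_analysis.
Set Implicit Arguments. Unset Strict Implicit. Unset Printing Implicit Defensive.
Import Order.TTheory GRing.Theory Num.Theory.
Local Open Scope ring_scope.
Local Open Scope classical_set_scope.

Section SphDefs.
Variable R : realType.
Variable m : nat.  (* ambient dimension: points of S^d live in R^m, m = d+1 *)
Notation vec := 'rV[R]_m.

Definition dotv (u v : vec) : R := \sum_(k < m) u 0 k * v 0 k.
Definition normv (u : vec) : R := Num.sqrt (dotv u u).
Definition normalize (u : vec) : vec := (normv u)^-1 *: u.

Definition on_sphere (x : vec) : Prop := dotv x x = 1.

Definition sangle (x y : vec) : R := acos (dotv x y).

(* spherical convex hull of the points a i with P i: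
   { sum lam_i a_i / || sum lam_i a_i || : lam_i >= 0, not all 0 } *)
Definition spco n (a : 'I_n -> vec) (P : pred 'I_n) : set vec :=
  [set y | exists lam : 'I_n -> R,
     (forall i, 0 <= lam i) /\ (forall i, ~~ P i -> lam i = 0) /\
     (exists i, P i /\ lam i != 0) /\
     y = normalize (\sum_(i < n) lam i *: a i)].

Definition simplex_set n (a : 'I_n -> vec) : set vec := spco a predT.

Definition is_simplex n (a : 'I_n -> vec) : Prop :=
  (forall i, on_sphere (a i)) /\ row_free (\matrix_(i < n) a i).

Definition is_regular n (a : 'I_n -> vec) : Prop :=
  forall i j k l, i != j -> k != l -> sangle (a i) (a j) = sangle (a k) (a l).

Definition cap_contains (X : set vec) (C : vec) (rho : R) : Prop :=
  forall y, X y -> sangle C y <= rho.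

Definition is_circum (X : set vec) (C : vec) (rho : R) : Prop :=
  on_sphere C /\ cap_contains X C rho /\
  forall C' rho', on_sphere C' -> cap_contains X C' rho' -> rho <= rho'.

(* a_i' : the intersection of the great circle through a_i and C with
   the facet co{a_j : j <> i} (a point of the sphere in span(a_i, C)) *)
Definition opp_point n (a : 'I_n -> vec) (C : vec) (i : 'I_n) : vec :=
  xget 0 [set p | spco a (predC1 i) p /\
                  exists s t : R, p = s *: a i + t *: C].

Definition vertex_diam n (a : 'I_n -> vec) (C : vec) : R :=
  \big[Num.max/0]_(i < n) sangle (a i) (opp_point a C i).

End SphDefs.

(* Main.v *)
Require Import Defs.
From HB Require Import structures.
From mathcomp Require Import all_boot all_order all_algebra.
From mathcomp Require Import all_classical all_reals all_analysis.
From mathcomp Require Import ring lra.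
Set Implicit Arguments. Unset Strict Implicit. Unset Printing Implicit Defensive.
Import Order.TTheory GRing.Theory Num.Theory.
Local Open Scope ring_scope.

Section Basic.
Variable R : realType.
Variable n : nat.
Implicit Types u v w : 'rV[R]_n.

Lemma dotvC u v : dotv u v = dotv v u.
Proof. by rewrite /dotv; apply: eq_bigr => k _; rewrite mulrC. Qed.

Lemma dotvDl u v w : dotv (u + v) w = dotv u w + dotv v w.
Proof. by rewrite /dotv -big_split; apply: eq_bigr => k _; rewrite mxE mulrDl. Qed.

Lemma dotvZl (a : R) u w : dotv (a *: u) w = a * dotv u w.
Proof. by rewrite /dotv mulr_sumr; apply: eq_bigr => k _; rewrite mxE mulrA. Qed.

Lemma dotvNl u w : dotv (- u) w = - dotv u w.
Proof. by rewrite -scaleN1r dotvZl mulN1r. Qed.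

Lemma dotvBl u v w : dotv (u - v) w = dotv u w - dotv v w.
Proof. by rewrite dotvDl dotvNl. Qed.

Lemma dotvDr u v w : dotv w (u + v) = dotv w u + dotv w v.
Proof. by rewrite dotvC dotvDl !(dotvC w). Qed.
Lemma dotvZr (a : R) u w : dotv w (a *: u) = a * dotv w u.
Proof. by rewrite dotvC dotvZl dotvC. Qed.
Lemma dotvBr u v w : dotv w (u - v) = dotv w u - dotv w v.
Proof. by rewrite dotvC dotvBl !(dotvC w). Qed.

Lemma dotv_suml k (F : 'I_k -> 'rV[R]_n) w :
  dotv (\sum_(j < k) F j) w = \sum_(j < k) dotv (F j) w.
Proof.
rewrite /dotv exchange_big /=; apply: eq_bigr => l _.
by rewrite summxE mulr_suml.
Qed.

Lemma dotv_comb k (al : 'I_k -> R) (F : 'I_k -> 'rV[R]_n) w :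
  dotv (\sum_(j < k) al j *: F j) w = \sum_(j < k) al j * dotv (F j) w.
Proof. by rewrite dotv_suml; apply: eq_bigr => j _; rewrite dotvZl. Qed.

Lemma dotv_ge0 u : 0 <= dotv u u.
Proof. by apply: sumr_ge0 => k _; rewrite -expr2 sqr_ge0. Qed.

Lemma dotv_eq0 u : dotv u u = 0 -> u = 0.
Proof.
move=> /eqP; rewrite psumr_eq0; last by move=> k _; rewrite -expr2 sqr_ge0.
move=> /allP H; apply/rowP => k; rewrite mxE.
have /H : k \in index_enum 'I_n by rewrite mem_index_enum.
by rewrite /= mulf_eq0 orbb => /eqP.
Qed.

Lemma dotv_gt0 u : u != 0 -> 0 < dotv u u.
Proof.
move=> u0; rewrite lt_def dotv_ge0 andbT; apply/eqP => /dotv_eq0 H.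
by rewrite H eqxx in u0.
Qed.

Lemma cs_unit (x y : 'rV[R]_n) : on_sphere x -> on_sphere y -> -1 <= dotv x y <= 1.
Proof.
rewrite /on_sphere => hx hy.
have h1 := dotv_ge0 (x - y); have h2 := dotv_ge0 (x + y).
rewrite dotvBl !dotvBr hx hy (dotvC y x) in h1.
rewrite dotvDl !dotvDr hx hy (dotvC y x) in h2.
apply/andP; split; lra.
Qed.

Lemma normalize_unit v : v != 0 -> on_sphere (normalize v).
Proof.
move=> v0; rewrite /on_sphere /normalize /normv dotvZl dotvZr.
have hp := dotv_gt0 v0.
have hs : 0 < Num.sqrt (dotv v v) by rewrite sqrtr_gt0.
rewrite mulrA -expr2 exprVn sqr_sqrtr ?ltW // mulVf //.
by rewrite gt_eqF.
Qed.

Lemma acos_le (x y : R) : -1 <= x -> x <= y -> y <= 1 -> acos y <= acos x.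
Proof.
move=> h1 h2 h3.
have hx : -1 <= x <= 1 by rewrite h1 /= (le_trans h2 h3).
have hy : -1 <= y <= 1 by rewrite h3 andbT (le_trans h1 h2).
rewrite leNgt; apply/negP => H.
have := @ltr_cos R (acos x) (acos y).
rewrite !in_itv /= !acos_ge0 ?acos_lepi //= => /(_ isT isT).
by rewrite !acosK ?in_itv //= H ltNge h2.
Qed.

Lemma acos_lt (x y : R) : -1 <= x -> x < y -> y <= 1 -> acos y < acos x.
Proof.
move=> h1 h2 h3.
have hx : -1 <= x <= 1 by rewrite h1 /= ltW // (lt_le_trans h2 h3).
have hy : -1 <= y <= 1 by rewrite h3 andbT ltW // (le_lt_trans h1 h2).
have := @ltr_cos R (acos y) (acos x).
rewrite !in_itv /= !acos_ge0 ?acos_lepi //= => /(_ isT isT).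
by rewrite !acosK ?in_itv //= => <-.
Qed.

End Basic.

Section Mat.
Variable R : realType.
Variable n : nat.
Variable x : 'I_n -> 'rV[R]_n.
Hypothesis Hs : is_simplex x.

Local Notation X := (\matrix_(i < n) x i).

Lemma comb_mul (al : 'I_n -> R) :
  \sum_j al j *: x j = (\row_j al j) *m X.
Proof. by rewrite mulmx_sum_row; apply: eq_bigr => j _; rewrite rowK mxE. Qed.

Lemma indep (al be : 'I_n -> R) :
  \sum_j al j *: x j = \sum_j be j *: x j -> forall j, al j = be j.
Proof.
rewrite !comb_mul => /(row_free_inj Hs.2) H j.
by have := congr1 (fun r : 'rV_n => r 0 j) H; rewrite !mxE.
Qed.

Lemma comb_neq0 (al : 'I_n -> R) j : al j != 0 -> \sum_i al i *: x i != 0.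
Proof.
move=> H; apply/eqP => H0.
have : \sum_i al i *: x i = \sum_i (fun _ => 0 : R) i *: x i.
  by rewrite H0 big1 // => i _; rewrite scale0r.
by move=> /indep /(_ j) /eqP; rewrite (negbTE H).
Qed.

Lemma coords (v : 'rV[R]_n) : exists al : 'I_n -> R, v = \sum_j al j *: x j.
Proof.
have hu : X \in unitmx by rewrite -row_free_unit; exact: Hs.2.
exists (fun j => (v *m invmx X) 0 j); rewrite comb_mul.
have -> : \row_j (v *m invmx X) 0 j = v *m invmx X by apply/rowP => j; rewrite mxE.
by rewrite mulmxKV.
Qed.

Lemma dual (f : 'I_n -> R) : exists w : 'rV[R]_n, forall j, dotv (x j) w = f j.
Proof.
have hu : X \in unitmx by rewrite -row_free_unit; exact: Hs.2.
exists (invmx X *m \col_j f j)^T => j.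
have := congr1 (fun M : 'cV_n => M j 0) (mulKVmx hu (\col_j f j)).
rewrite [in X in _ = X -> _]mxE => <-; rewrite /dotv !mxE; apply: eq_bigr => k _.
by rewrite !mxE.
Qed.

End Mat.

Section Cap.
Variable R : realType.
Variable k : nat.
Local Notation n := k.+1.
Variable x : 'I_n -> 'rV[R]_n.
Hypothesis Hs : is_simplex x.

Lemma dotv_xx i j : dotv (x i) (x j) <= 1.
Proof. by have /andP[] := cs_unit (Hs.1 i) (Hs.1 j). Qed.

Lemma cap_lemma (C' : 'rV[R]_n) (c' : R) : on_sphere C' -> 0 <= c' ->
  (forall j, c' <= dotv C' (x j)) -> cap_contains (simplex_set x) C' (acos c').
Proof.
move=> hC' hc' hj y [lam [hl0 [_ [[j0 [_ hj0]] ->]]]].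
set v := \sum_i lam i *: x i.
have v0 : v != 0 by exact: (comb_neq0 Hs hj0).
have hy := normalize_unit v0.
set S := \sum_i lam i.
have hS : 0 <= S by apply: sumr_ge0.
have hD : c' * S <= dotv C' v.
  rewrite dotvC /v dotv_comb /S mulr_sumr; apply: ler_sum => i _.
  by rewrite mulrC; apply: ler_wpM2l => //; rewrite dotvC.
have hvv : dotv v v <= S ^+ 2.
  rewrite {1}/v dotv_comb expr2 {1}/S mulr_suml; apply: ler_sum => i _.
  apply: ler_wpM2l => //; rewrite dotvC /v dotv_comb /S.
  apply: ler_sum => j _; rewrite -[X in _ <= X]mulr1; apply: ler_wpM2l => //.
  exact: dotv_xx.
have hvp := dotv_gt0 v0.
set N := Num.sqrt (dotv v v).
have hN : 0 < N by rewrite sqrtr_gt0.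
have hN2 : N ^+ 2 = dotv v v by rewrite sqr_sqrtr // ltW.
have hNS : N <= S by nra.
rewrite /sangle.
set Ni := N^-1.
have hNi : Ni * N = 1 by rewrite mulVf // gt_eqF.
have hNi0 : 0 < Ni by rewrite invr_gt0.
apply: acos_le; first by lra.
  rewrite /normalize dotvZr -/N -/Ni.
  have h1 : c' * N <= dotv C' v by apply: le_trans hD; apply: ler_wpM2l.
  have := ler_wpM2l (ltW hNi0) h1.
  by rewrite mulrCA hNi mulr1.
by have /andP[] := cs_unit hC' (normalize_unit v0).
Qed.

End Cap.

Section Circ.
Variable R : realType.
Variable k : nat.
Local Notation n := k.+1.
Variable x : 'I_n -> 'rV[R]_n.
Variable C : 'rV[R]_n.
Variable r : R.
Hypothesis Hs : is_simplex x.
Hypothesis Hc : is_circum (simplex_set x) C r.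
Hypothesis He : forall i, sangle C (x i) = r.

Lemma circ_dot i : dotv C (x i) = cos r.
Proof. by rewrite -(He i) /sangle acosK // in_itv /=; apply: cs_unit => //; [exact: Hc.1| exact: Hs.1]. Qed.

Lemma circ_r : r = acos (cos r).
Proof. by rewrite -(circ_dot ord0) -(He ord0). Qed.

Lemma circ_c_range : -1 <= cos r <= 1.
Proof. by rewrite -(circ_dot ord0); apply: cs_unit => //; [exact: Hc.1| exact: Hs.1]. Qed.

Lemma better (C' : 'rV[R]_n) (c' : R) : on_sphere C' -> 0 <= c' -> cos r < c' ->
  (forall j, c' <= dotv C' (x j)) -> False.
Proof.
move=> h1 h2 h3 h4.
have hcap := cap_lemma Hs h1 h2 h4.
have := Hc.2.2 _ _ h1 hcap.
have hc1 : c' <= 1 by apply: (le_trans (h4 ord0)); have /andP[] := cs_unit h1 (Hs.1 ord0).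
have /andP[hm _] := circ_c_range.
have := acos_lt hm h3 hc1.
rewrite -circ_r => H1 H2.
by have := lt_le_trans H1 H2; rewrite ltxx.
Qed.

Lemma c_pos : 0 < cos r.
Proof.
rewrite ltNge; apply/negP => hc.
have [w hw] := dual Hs (fun _ => 1).
have w0 : w != 0.
  apply/eqP => w0; have := hw ord0; rewrite w0 /dotv big1 ?mxE; last by move=> j _; rewrite mxE mulr0.
  by move/eqP; rewrite eq_sym oner_eq0.
have hp := dotv_gt0 w0.
set N := Num.sqrt (dotv w w).
have hN : 0 < N by rewrite sqrtr_gt0.
apply: (@better (normalize w) (N^-1)).
- exact: normalize_unit.
- by rewrite invr_ge0 ltW.
- by apply: le_lt_trans hc _; rewrite invr_gt0.
- by move=> j; rewrite /normalize dotvZl dotvC hw mulr1.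
Qed.

Lemma lam_prop (lam : 'I_n -> R) : C = \sum_j lam j *: x j ->
  cos r * \sum_j lam j = 1.
Proof.
move=> HC.
have := Hc.1; rewrite /on_sphere {1}HC dotv_comb mulr_sumr => <-.
by apply: eq_bigr => j _; rewrite dotvC circ_dot mulrC.
Qed.

End Circ.

Section Circ2.
Variable R : realType.
Variable k : nat.
Local Notation n := k.+1.
Variable x : 'I_n -> 'rV[R]_n.
Variable C : 'rV[R]_n.
Variable r : R.
Hypothesis Hs : is_simplex x.
Hypothesis Hc : is_circum (simplex_set x) C r.
Hypothesis He : forall i, sangle C (x i) = r.

Lemma lam_ge0 (lam : 'I_n -> R) : C = \sum_j lam j *: x j -> forall j, 0 <= lam j.
Proof.
move=> HC kk; rewrite leNgt; apply/negP => hk.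
set c := cos r.
have hc : 0 < c := c_pos Hs Hc He.
have hS := lam_prop Hs Hc He HC; rewrite -/c in hS.
set t := (c * lam kk)^-1.
have hck : c * lam kk < 0 by rewrite pmulr_rlt0.
have ht : t * (c * lam kk) = 1 by rewrite mulVf // lt_eqF.
have ht0 : t < 0 by rewrite /t invr_lt0.
pose f := fun j : 'I_n => if j == kk then 1 - t else 1.
have hf1 : forall j, 1 <= f j by move=> j; rewrite /f; case: ifP => _; lra.
have [u hu] := dual Hs f.
have hCu : dotv C u = 0.
  rewrite HC dotv_comb (bigD1 kk) //= hu /f eqxx.
  rewrite (bigD1 kk) //= in hS.
  set T := \sum_(i < n | i != kk) lam i in hS.
  have -> : \sum_(i < n | i != kk) lam i * dotv (x i) u = T.
    by apply: eq_bigr => i /negbTE hi; rewrite hu /f hi mulr1.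
  have : c * (lam kk * (1 - t) + T) = 0.
    have -> : c * (lam kk * (1 - t) + T) = c * (lam kk + T) - t * (c * lam kk) by ring.
    by rewrite hS ht subrr.
  by move/eqP; rewrite mulf_eq0 gt_eqF //= => /eqP.
have u0 : u != 0.
  apply/eqP => u0; have := hf1 ord0; rewrite -hu u0 /dotv big1; first by rewrite ler10.
  by move=> j _; rewrite mxE mulr0.
have hq := dotv_gt0 u0.
set q := dotv u u in hq.
set eps := (c * q)^-1.
have heps : eps * (c * q) = 1 by rewrite mulVf // gt_eqF // mulr_gt0.
have heps0 : 0 < eps by rewrite invr_gt0 mulr_gt0.
set v := C + eps *: u.
have hvv : dotv v v = 1 + eps ^+ 2 * q.
  rewrite /v dotvDl !dotvDr !dotvZl !dotvZr hCu (dotvC u C) hCu.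
  have := Hc.1; rewrite /on_sphere => ->; rewrite -/q; ring.
have v0 : v != 0.
  apply/eqP => v0; move: hvv; rewrite v0 /dotv big1; last by move=> j _; rewrite mxE mul0r.
  move=> H; have : 0 < eps ^+ 2 * q by rewrite mulr_gt0 // exprn_gt0.
  lra.
set N := Num.sqrt (dotv v v).
have hvp := dotv_gt0 v0.
have hN : 0 < N by rewrite sqrtr_gt0.
have hN2 : N ^+ 2 = 1 + eps ^+ 2 * q by rewrite sqr_sqrtr ?hvv // ltW // -hvv.
set Ni := N^-1.
have hNi : Ni * N = 1 by rewrite mulVf // gt_eqF.
have hNi0 : 0 < Ni by rewrite invr_gt0.
apply: (@better _ _ _ _ _ Hs Hc He (normalize v) (Ni * (c + eps))).
- exact: normalize_unit.
- by apply: mulr_ge0; lra.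
- have hcN : c * N < c + eps.
    have h2 : (c * N) ^+ 2 < (c + eps) ^+ 2.
      rewrite exprMn hN2.
      have -> : c ^+ 2 * (1 + eps ^+ 2 * q) = c ^+ 2 + c * eps * (eps * (c * q)) by ring.
      rewrite heps; nra.
    have hcN0 : 0 <= c * N by apply: mulr_ge0; lra.
    have hb : 0 < c + eps by lra.
    move: h2 hcN0 hb; set a := c * N; set b := c + eps; move=> h2 hcN0 hb; nra.
  have := ltr_pM2l hNi0; move=> /(_ (c * N) (c + eps)); rewrite hcN.
  by rewrite mulrCA hNi mulr1.
- move=> j; rewrite /normalize dotvZl -/N -/Ni; apply: ler_wpM2l; first exact: ltW.
  rewrite /v dotvDl dotvZl (circ_dot Hs Hc He) dotvC hu -/c.
  have := hf1 j; nra.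
Qed.

End Circ2.

Section Opp.
Local Open Scope classical_set_scope.
Variable R : realType.
Variable k : nat.
Local Notation n := k.+1.
Variable x : 'I_n -> 'rV[R]_n.
Variable C : 'rV[R]_n.
Variable lam : 'I_n -> R.
Variable c : R.
Hypothesis Hs : is_simplex x.
Hypothesis HCs : on_sphere C.
Hypothesis HC : C = \sum_j lam j *: x j.
Hypothesis Hl : forall j, 0 <= lam j.
Hypothesis Hd : forall j, dotv C (x j) = c.
Variable i : 'I_n.
Hypothesis Hi : c < lam i.

Lemma opp_key : let P := dotv (x i) (opp_point x C i) in
  P < 0 /\ P ^+ 2 * ((lam i - c) ^+ 2 + 1 - c ^+ 2) = (lam i - c) ^+ 2.
Proof.
move=> P.
pose lam' := fun j => if j == i then 0 else lam j.
set w := C - lam i *: x i.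
have hw : \sum_j lam' j *: x j = w.
  rewrite /w HC (bigD1 i) //= [X in _ = X - _](bigD1 i) //= /lam' eqxx scale0r add0r.
  rewrite addrC addrK; apply: eq_bigr => j /negbTE ->; by [].
have [[j1 [hj1 hl1]] | hno] := pselect (exists j, j != i /\ lam j != 0); last first.
  exfalso.
  have Hz : \sum_(j < n | j != i) lam j *: x j = 0.
    apply: big1 => j hj; case: (eqVneq (lam j) 0) => [->|hl]; first by rewrite scale0r.
    by exfalso; apply: hno; exists j.
  have HC' : C = lam i *: x i by rewrite HC (bigD1 i) //= Hz addr0.
  have := Hd i; rewrite HC' dotvZl (Hs.1 i) mulr1 => hh.
  by move: Hi; rewrite hh ltxx.
have hl1' : lam' j1 != 0 by rewrite /lam' (negbTE hj1).
have w0 : w != 0 by rewrite -hw; exact: (comb_neq0 Hs hl1').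
have hex : exists p, [set p | spco x (predC1 i) p /\
                  exists s t : R, p = s *: x i + t *: C] p.
  exists (normalize w); split.
    exists lam'; split; first by move=> j; rewrite /lam'; case: ifP.
    split; first by move=> j /=; rewrite negbK /lam' => ->.
    split; first by exists j1; split.
    by rewrite hw.
  exists (- ((normv w)^-1 * lam i)), ((normv w)^-1).
  by rewrite /normalize /w scalerBr scalerA scaleNr addrC.
have := xgetPex 0 hex; rewrite -/(opp_point x C i) in P *.
set p := opp_point x C i.
move=> [[mu [hm0 [hmi [[j0 [hj0 hmj0]] hp]]]] [s [t hst]]].
have hmi' : mu i = 0 by apply: hmi; rewrite /= negbK.
set v := \sum_j mu j *: x j in hp.
have v0 : v != 0 by exact: (comb_neq0 Hs hmj0).
have hpu : dotv p p = 1 by rewrite hp; exact: normalize_unit.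
set Ni := (normv v)^-1 in hp.
have hNi0 : 0 < Ni by rewrite invr_gt0 sqrtr_gt0 dotv_gt0.
have hcoef : \sum_j (Ni * mu j) *: x j =
             \sum_j (s * (j == i)%:R + t * lam j) *: x j.
  have -> : \sum_j (Ni * mu j) *: x j = p.
    by rewrite hp /normalize -/Ni /v scaler_sumr; apply: eq_bigr => j _; rewrite scalerA.
  rewrite hst.
  under eq_bigr => j _ do rewrite scalerDl.
  rewrite big_split /= (bigD1 i) //= eqxx mulr1 big1 ?addr0; last first.
    by move=> j /negbTE ->; rewrite mulr0 scale0r.
  by rewrite HC scaler_sumr; congr (_ + _); apply: eq_bigr => j _; rewrite scalerA.
have hci := indep Hs hcoef i; rewrite hmi' mulr0 eqxx mulr1 in hci.
have hcj := indep Hs hcoef j0; rewrite (negbTE hj0) mulr0 add0r in hcj.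
have hmj0' : 0 < mu j0 by rewrite lt_def hmj0 hm0.
have hl0 := Hl j0.
have ht : 0 < t.
  have h : 0 < t * lam j0 by rewrite -hcj mulr_gt0.
  rewrite ltNge; apply/negP => H.
  have : t * lam j0 <= 0 by rewrite mulr_le0_ge0.
  lra.
have hs : s = - (t * lam i) by lra.
have hP : P = t * (c - lam i).
  rewrite /P -/p hst dotvDr !dotvZr (Hs.1 i) dotvC Hd hs; ring.
have hpp : t ^+ 2 * (lam i ^+ 2 - 2 * lam i * c + 1) = 1.
  move: hpu; rewrite hst !dotvDl !dotvDr !dotvZl !dotvZr (Hs.1 i) HCs (dotvC (x i) C) Hd hs.
  move=> H; apply: (etrans _ H); ring.
split; first by rewrite hP pmulr_rlt0 // subr_lt0.
have -> : P ^+ 2 * ((lam i - c) ^+ 2 + 1 - c ^+ 2) =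
   (lam i - c) ^+ 2 * (t ^+ 2 * (lam i ^+ 2 - 2 * lam i * c + 1)) by rewrite hP; ring.
by rewrite hpp mulr1.
Qed.
End Opp.

Lemma sum_delta (R : realType) n m (x : 'I_n -> 'rV[R]_m) a :
  \sum_j ((j == a)%:R : R) *: x j = x a.
Proof.
rewrite (bigD1 a) //= eqxx scale1r big1 ?addr0 // => j /negbTE ->.
by rewrite scale0r.
Qed.

Section RegB.
Variable R : realType.
Variable k : nat.
Hypothesis hk : (1 <= k)%N.
Local Notation n := k.+1.
Variable x : 'I_n -> 'rV[R]_n.
Variable C : 'rV[R]_n.
Variable r : R.
Hypothesis Hs : is_simplex x.
Hypothesis Hreg : is_regular x.
Hypothesis Hc : is_circum (simplex_set x) C r.
Hypothesis He : forall i, sangle C (x i) = r.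

Lemma reg_lam (lam : 'I_n -> R) : C = \sum_j lam j *: x j ->
  forall i, lam i = (cos r * k.+1%:R)^-1.
Proof.
move=> HC.
have h0m : (ord0 : 'I_n) != ord_max by rewrite -val_eqE /= neq_ltn hk.
set e := dotv (x ord0) (x ord_max).
have hE : forall i j, i != j -> dotv (x i) (x j) = e.
  move=> i j hij; have := Hreg hij h0m; rewrite /sangle => H.
  have := congr1 cos H; rewrite !acosK // in_itv /=; apply: cs_unit; exact: Hs.1.
have he1 : e != 1.
  apply/eqP => he.
  have hz : dotv (x ord0 - x ord_max) (x ord0 - x ord_max) = 0.
    rewrite dotvBl !dotvBr (Hs.1 ord0) (Hs.1 ord_max) (dotvC (x ord_max)) -/e he.
    lra.
  have := dotv_eq0 hz => /eqP; rewrite subr_eq0 => /eqP hx.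
  have := @indep R n x Hs (fun j => (j == ord0)%:R) (fun j => (j == ord_max)%:R).
  rewrite !sum_delta => /(_ hx ord0); rewrite eqxx (negbTE h0m).
  by move/eqP; rewrite oner_eq0.
set S := \sum_j lam j.
have hS : cos r * S = 1 := lam_prop Hs Hc He HC.
have hI : forall i, lam i * (1 - e) = cos r - e * S.
  move=> i; rewrite -(circ_dot Hs Hc He i) HC dotv_comb /S (bigD1 i) //= [X in _ = _ - _ * X](bigD1 i) //=.
  rewrite (Hs.1 i) mulr1.
  have -> : \sum_(j < n | j != i) lam j * dotv (x j) (x i) = e * \sum_(j < n | j != i) lam j.
    by rewrite mulr_sumr; apply: eq_bigr => j hj; rewrite hE // mulrC.
  ring.
have hc := c_pos Hs Hc He.
have h1e : 1 - e != 0 by rewrite subr_eq0 eq_sym.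
have hconst : forall i, lam i = lam ord0.
  move=> i; apply: (mulIf h1e); by rewrite !hI.
have hS' : S = k.+1%:R * lam ord0.
  rewrite /S (eq_bigr (fun _ => lam ord0)); last by move=> j _; exact: hconst.
  by rewrite sumr_const card_ord mulr_natl.
move=> i; rewrite hconst.
rewrite hS' mulrA in hS.
have hne : cos r * k.+1%:R != 0 by rewrite mulf_neq0 // ?gt_eqF // ltr0n.
by apply: (mulfI hne); rewrite hS mulfV.
Qed.

End RegB.

Lemma sum_pick (R : realType) n (f : 'I_n -> R) j :
  \sum_l f l * ((l == j)%:R : R) = f j.
Proof.
rewrite (bigD1 j) //= eqxx mulr1 big1 ?addr0 // => l /negbTE ->.
by rewrite mulr0.
Qed.

Lemma sum_pick' (R : realType) n (f : 'I_n -> R) j :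
  \sum_l f l * ((j == l)%:R : R) = f j.
Proof. by rewrite -(sum_pick f j); apply: eq_bigr => l _; rewrite eq_sym. Qed.

Section Exist.
Variable R : realType.
Variable k : nat.
Hypothesis hk : (1 <= k)%N.
Local Notation n := k.+1.
Variable c : R.
Hypothesis hc : 0 < c.
Hypothesis hc2 : c ^+ 2 * k.+1%:R < 1.

Let N1 : R := k.+1%:R.
Let sg : R := Num.sqrt N1.
Let one : 'rV[R]_n := \row_l 1.
Let ev (j : 'I_n) : 'rV[R]_n := \row_l ((l == j)%:R).
Let s : R := c * sg.
Let be : R := Num.sqrt ((1 - c ^+ 2) * N1 / k%:R).
Let al : R := (s - be) / N1.
Definition regb (j : 'I_n) : 'rV[R]_n := al *: one + be *: ev j.
Definition regC : 'rV[R]_n := sg^-1 *: one.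

Lemma N1_gt0 : 0 < N1. Proof. by rewrite ltr0n. Qed.
Lemma sg2 : sg ^+ 2 = N1. Proof. by rewrite sqr_sqrtr // ltW // N1_gt0. Qed.
Lemma sg_gt0 : 0 < sg. Proof. by rewrite sqrtr_gt0 N1_gt0. Qed.
Lemma k_gt0 : 0 < (k%:R : R). Proof. by rewrite ltr0n. Qed.
Lemma c_lt1 : c ^+ 2 < 1.
Proof.
have : 1 <= (k.+1%:R : R) by rewrite ler1n.
have : 0 <= c ^+ 2 by rewrite sqr_ge0.
have := hc2; nra.
Qed.
Lemma be2 : be ^+ 2 = (1 - c ^+ 2) * N1 / k%:R.
Proof.
rewrite sqr_sqrtr // mulr_ge0 // ?invr_ge0 ?ler0n // mulr_ge0 ?ler0n //.
by have := c_lt1; lra.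
Qed.
Lemma be_gt0 : 0 < be.
Proof.
rewrite sqrtr_gt0 mulr_gt0 // ?invr_gt0 ?k_gt0 // mulr_gt0 ?N1_gt0 //.
by have := c_lt1; lra.
Qed.
Lemma s_def : N1 * al + be = s.
Proof. rewrite /al mulrC -mulrA mulVf ?mulr1 ?gt_eqF ?N1_gt0 //; ring. Qed.

Lemma dot_one_one : dotv one one = N1.
Proof.
rewrite /dotv (eq_bigr (fun _ => 1)); last by move=> l _; rewrite !mxE mulr1.
by rewrite sumr_const card_ord.
Qed.
Lemma dot_v_ev (v : 'rV[R]_n) j : dotv v (ev j) = v 0 j.
Proof. by rewrite /dotv (eq_bigr (fun l => v 0 l * (l == j)%:R)) ?sum_pick // => l _; rewrite mxE. Qed.
Lemma dot_ev_v (v : 'rV[R]_n) j : dotv (ev j) v = v 0 j.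
Proof. by rewrite dotvC dot_v_ev. Qed.

Lemma regb_dot i j : dotv (regb i) (regb j) = al * s + be * al + be ^+ 2 * (i == j)%:R.
Proof.
rewrite /regb !dotvDl !dotvDr !dotvZl !dotvZr dot_one_one !dot_v_ev !dot_ev_v !mxE.
rewrite -s_def eq_sym; ring.
Qed.

Lemma regb_unit i : on_sphere (regb i).
Proof.
rewrite /on_sphere regb_dot eqxx mulr1 be2 /al.
have hN : N1 != 0 by rewrite gt_eqF // N1_gt0.
have hk0 : (k%:R : R) != 0 by rewrite gt_eqF // k_gt0.
have hN1 : N1 = k%:R + 1 by rewrite /N1 -addn1 natrD.
have hs2 : s ^+ 2 = c ^+ 2 * N1 by rewrite /s exprMn sg2.
apply: (mulfI hN); apply: (mulfI hk0).
have -> : k%:R * (N1 * ((s - be) / N1 * s + be * ((s - be) / N1) + (1 - c ^+ 2) * N1 / k%:R))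
   = k%:R * (s ^+ 2 - be ^+ 2) * (N1 / N1) + (1 - c ^+ 2) * N1 * N1 * (k%:R / k%:R) by ring.
rewrite !mulfV // !mulr1 hs2 be2.
have -> : k%:R * (c ^+ 2 * N1 - (1 - c ^+ 2) * N1 / k%:R) = k%:R * c ^+ 2 * N1 - (1 - c ^+ 2) * N1 * (k%:R / k%:R) by ring.
rewrite mulfV // hN1; ring.
Qed.

Lemma regC_dot j : dotv regC (regb j) = c.
Proof.
rewrite /regC /regb dotvZl dotvDr !dotvZr dot_one_one dot_v_ev mxE mulr1 (mulrC al) s_def.
by rewrite /s mulrCA mulVf ?mulr1 // gt_eqF // sg_gt0.
Qed.

Lemma regC_unit : on_sphere regC.
Proof.
rewrite /on_sphere /regC dotvZl dotvZr dot_one_one mulrA -expr2 exprVn sg2 mulVf //.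
by rewrite gt_eqF // N1_gt0.
Qed.

Lemma regb_simplex : is_simplex regb.
Proof.
split; first exact: regb_unit.
apply: inj_row_free => v H.
have hl : forall l, al * (\sum_j v 0 j) + be * v 0 l = 0.
  move=> l; have := congr1 (fun M : 'rV_n => M 0 l) H; rewrite /= [X in _ = X]mxE => H0.
  apply: (etrans _ H0); rewrite mxE.
  rewrite mulr_sumr -(sum_pick' (fun j => v 0 j) l) mulr_sumr -big_split /=.
  by apply: eq_bigr => j _; rewrite !mxE; ring.
set V := \sum_j v 0 j in hl.
have hV : V = 0.
  have : \sum_l (al * V + be * v 0 l) = 0 by rewrite big1.
  rewrite big_split /= sumr_const card_ord -mulr_sumr -/V.
  have -> : (al * V) *+ n + be * V = (N1 * al + be) * V by rewrite /N1 -mulr_natl; ring.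
  rewrite s_def => /eqP; rewrite mulf_eq0 => /orP[|/eqP //].
  by rewrite /s mulf_eq0 gt_eqF // gt_eqF // sg_gt0.
apply/rowP => l; rewrite mxE.
have := hl l; rewrite hV mulr0 add0r => /eqP; rewrite mulf_eq0 gt_eqF ?be_gt0 //=.
by move/eqP.
Qed.

Lemma regb_regular : is_regular regb.
Proof.
move=> i j i' j' hij hij'; rewrite /sangle !regb_dot.
by rewrite (negbTE hij) (negbTE hij').
Qed.
Lemma regb_mem j : simplex_set regb (regb j).
Proof.
exists (fun l => (l == j)%:R); split; first by move=> l; rewrite ler0n.
split; first by [].
split; first by exists j; split => //; rewrite eqxx oner_eq0.
rewrite sum_delta /normalize /normv (regb_unit j) sqrtr1 invr1 scale1r //.
Qed.

Lemma regb_circum r : r = acos c ->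
  is_circum (simplex_set regb) regC r /\ forall i, sangle regC (regb i) = r.
Proof.
move=> hr.
split; last by move=> i; rewrite /sangle regC_dot hr.
split; first exact: regC_unit.
split.
  rewrite hr; apply: (cap_lemma regb_simplex regC_unit (ltW hc)).
  by move=> j; rewrite regC_dot.
move=> C' rho' hC' hcap.
set D1 := dotv C' one.
have hD1 : D1 = sg * dotv C' regC.
  by rewrite /regC dotvZr mulrA mulfV ?mul1r // gt_eqF // sg_gt0.
have hsum : \sum_j dotv C' (regb j) = s * D1.
  rewrite (eq_bigr (fun j => al * D1 + be * C' 0 j)); last first.
    by move=> j _; rewrite /regb dotvDr !dotvZr dot_v_ev.
  rewrite big_split /= sumr_const card_ord -mulr_sumr.
  have -> : \sum_(i < n) C' 0 i = D1.
    by rewrite /D1 /dotv; apply: eq_bigr => l _; rewrite mxE mulr1.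
  by rewrite -s_def /N1 -mulr_natl; ring.
have hCC : dotv C' regC <= 1 by have /andP[] := cs_unit hC' regC_unit.
have hle : \sum_j dotv C' (regb j) <= c * N1.
  rewrite hsum hD1 /s mulrA -(mulrA c) -expr2 sg2.
  have : 0 < c * N1 by rewrite mulr_gt0 // N1_gt0.
  nra.
have [j hj] : exists j, dotv C' (regb j) <= c.
  apply/not_existsP => hno.
  have : \sum_(j < n) c < \sum_j dotv C' (regb j).
    apply: ltr_sum; first by apply/hasP; exists ord0; rewrite ?mem_index_enum.
    by move=> j _; rewrite ltNge; apply/negP => /hno.
  rewrite sumr_const card_ord -mulr_natl mulrC => H.
  by have := lt_le_trans H hle; rewrite ltxx.
apply: le_trans (hcap _ (regb_mem j)).
rewrite hr /sangle; apply: acos_le => //.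
  by have /andP[] := cs_unit hC' (regb_unit j).
by have := c_lt1; nra.
Qed.

End Exist.

Lemma cmp (R : realType) (Pa Pb ua ub K : R) : 0 < K -> 0 < ub -> ub <= ua ->
  Pa < 0 -> Pb < 0 -> Pa ^+ 2 * (ua ^+ 2 + K) = ua ^+ 2 ->
  Pb ^+ 2 * (ub ^+ 2 + K) = ub ^+ 2 -> -1 <= Pa /\ Pa <= Pb.
Proof.
move=> hK hub hu hPa hPb ha hb.
set Da := ua ^+ 2 + K in ha; set Db := ub ^+ 2 + K in hb.
have hDb : 0 < Db by rewrite /Db; have := sqr_ge0 ub; lra.
have hDab : Db <= Da by rewrite /Da /Db; have := sqr_ge0 ub; nra.
set qa := 1 - Pa ^+ 2; set qb := 1 - Pb ^+ 2.
have hqa : qa * Da = K by rewrite /qa mulrBl mul1r ha /Da; ring.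
have hqb : qb * Db = K by rewrite /qb mulrBl mul1r hb /Db; ring.
have hqa0 : 0 <= qa by nra.
have hqb0 : 0 <= qb by nra.
have hqab : qa <= qb by nra.
split; first by rewrite /qa in hqa0; nra.
rewrite /qa /qb in hqab; nra.
Qed.


Unset Implicit Arguments.

Theorem lemma3p5 (R : realType) (d : nat) (hd : (1 <= d)%N)
  (a : 'I_d.+1 -> 'rV[R]_d.+1) (C : 'rV[R]_d.+1) (R' : R) :
  is_simplex a ->
  is_circum (simplex_set a) C R' ->
  cos R' < (Num.sqrt (d.+1)%:R)^-1 ->
  (forall i, sangle C (a i) = R') ->
  (exists (b : 'I_d.+1 -> 'rV[R]_d.+1) (Cb : 'rV[R]_d.+1),
      is_simplex b /\ is_regular b /\ is_circum (simplex_set b) Cb R' /\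
      (forall i, sangle Cb (b i) = R'))
  /\
  (forall (b : 'I_d.+1 -> 'rV[R]_d.+1) (Cb : 'rV[R]_d.+1),
      is_simplex b -> is_regular b -> is_circum (simplex_set b) Cb R' ->
      (forall i, sangle Cb (b i) = R') ->
      vertex_diam b Cb <= vertex_diam a C).
Proof.
move=> hsa hca hcos hea.
set c := cos R' in hcos.
have hc : 0 < c := c_pos hsa hca hea.
have hR : R' = acos c := circ_r hsa hca hea.
set N := (d.+1%:R : R).
have hN : 0 < N by rewrite ltr0n.
have hsN : 0 < Num.sqrt N by rewrite sqrtr_gt0.
have hsN2 : Num.sqrt N ^+ 2 = N by rewrite sqr_sqrtr // ltW.
have hc2 : c ^+ 2 * N < 1.
  have h1 : c * Num.sqrt N < 1.
    have := ltr_pM2r hsN; move=> /(_ c (Num.sqrt N)^-1); rewrite hcos mulVf ?gt_eqF //.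
  have h0 : 0 <= c * Num.sqrt N by apply: mulr_ge0; apply: ltW.
  have : (c * Num.sqrt N) ^+ 2 < 1 by nra.
  by rewrite exprMn hsN2.
split.
  exists (regb c), (regC R d).
  split; first exact: regb_simplex.
  split; first exact: regb_regular.
  exact: regb_circum.
move=> b Cb hsb hrb hcb heb.
have [lam HC] := coords hsa C.
have hl := lam_ge0 hsa hca hea HC.
have hS : c * \sum_j lam j = 1 := lam_prop hsa hca hea HC.
set m := (c * N)^-1.
have hcN : 0 < c * N by rewrite mulr_gt0.
have hm : m * (c * N) = 1 by rewrite mulVf // gt_eqF.
have hm0 : 0 < m by rewrite invr_gt0.
have hcm : c < m.
  have : c * (c * N) < m * (c * N) by rewrite hm; nra.
  by rewrite ltr_pM2r.
have [i hi] : exists i, m <= lam i.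
  apply/not_existsP => hno.
  have : \sum_j lam j < \sum_(j < d.+1) m.
    apply: ltr_sum; first by apply/hasP; exists ord0; rewrite ?mem_index_enum.
    by move=> j _; rewrite ltNge; apply/negP => /hno.
  rewrite sumr_const card_ord -mulr_natl -/N => H.
  have : c * \sum_j lam j < c * (N * m) by rewrite ltr_pM2l.
  rewrite hS => H2.
  have : c * (N * m) = 1 by rewrite -hm; ring.
  lra.
have [hPa hPa2] := opp_key hsa hca.1 HC hl (circ_dot hsa hca hea) (lt_le_trans hcm hi).
set Pa := dotv (a i) (opp_point a C i) in hPa hPa2.
have [mu HCb] := coords hsb Cb.
have hmu := reg_lam hd hsb hrb hcb heb HCb.
rewrite -/c -/N -/m in hmu.
have hmu0 : forall j, 0 <= mu j by move=> j; rewrite hmu ltW.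
have hK : 0 < 1 - c ^+ 2.
  have : 1 <= N by rewrite ler1n.
  have := sqr_ge0 c; nra.
have hterm : forall j, sangle (b j) (opp_point b Cb j) <= acos Pa.
  move=> j.
  have hcj : c < mu j by rewrite hmu.
  have [hPb hPb2] := opp_key hsb hcb.1 HCb hmu0 (circ_dot hsb hcb heb) hcj.
  rewrite hmu in hPb2.
  set Pb := dotv (b j) (opp_point b Cb j) in hPb hPb2.
  have hPa2' : Pa ^+ 2 * ((lam i - c) ^+ 2 + (1 - c ^+ 2)) = (lam i - c) ^+ 2.
    rewrite addrA; exact: hPa2.
  have hPb2' : Pb ^+ 2 * ((m - c) ^+ 2 + (1 - c ^+ 2)) = (m - c) ^+ 2.
    rewrite addrA; exact: hPb2.
  have s1 : 0 < m - c by lra.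
  have s2 : m - c <= lam i - c by lra.
  have [h1 h2] := cmp hK s1 s2 hPa hPb hPa2' hPb2'.
  rewrite /sangle -/Pb; apply: acos_le => //; lra.
have hPa1 : -1 <= Pa.
  have hPa2' : Pa ^+ 2 * ((lam i - c) ^+ 2 + (1 - c ^+ 2)) = (lam i - c) ^+ 2.
    rewrite addrA; exact: hPa2.
  have hq := sqr_ge0 (lam i - c).
  have hPq : Pa ^+ 2 <= 1 by nra.
  nra.
apply: (@le_trans _ _ (acos Pa)).
  rewrite /vertex_diam; elim/big_ind: _.
  - by apply: acos_ge0; rewrite hPa1 /=; lra.
  - by move=> y z hy hz; rewrite ge_max hy hz.
  - by move=> j _; exact: hterm.
by rewrite /vertex_diam (bigD1 i) //= le_max lexx.
Qed.
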